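(* Let $L$ be an $n\times n$ nonsingular M-matrix with integer entries, and let $\phi_1,\dots,\phi_n:\mathbb{R}\to\mathbb{R}$ be non-negative strictly increasing functions. Define $E_\phi(q)=\sum_{i=1}^n\phi_i((L^{-1}q)_i)$ for $q\in\mathbb{Z}^n$. A vector $f\in\mathbb{Z}^n$ with $f\ge0$ is $z$-superstable with respect to $L$ if and only if $f$ is the minimizer of $\min_{g\sim f,\ g\ge0}E_\phi(g)$ (over $g\in\mathbb{Z}^n$).
   Context: A Z-matrix is a square real matrix whose off-diagonal entries are all $\le 0$. A nonsingular M-matrix is a Z-matrix $L$ that is invertible with $L^{-1}$ having all entries nonnegative. Vector inequalities are entrywise. For $f,g\in\mathbb{Z}^n$, $f\sim g$ means $g-f=Lz$ for some $z\in\mathbb{Z}^n$. A vector $f\in\mathbb{Z}^n$ with $f\ge0$ is $z$-superstable with respect to $L$ if for every $z\in\mathbb{Z}^n$ with $z\ge0$ and $z\ne0$ there exists $i$ with $f_i-(Lz)_i<0$. *)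

(* Defs.v *)
From HB Require Import structures.
From mathcomp Require Import all_boot all_order all_algebra.
Set Implicit Arguments. Unset Strict Implicit. Unset Printing Implicit Defensive.
Import Order.TTheory GRing.Theory Num.Theory.
Local Open Scope ring_scope.

Definition Zmatrix (n : nat) (L : 'M[int]_n) : Prop :=
  forall i j : 'I_n, i != j -> L i j <= 0.

Definition nonsingular_Mmatrix (n : nat) (L : 'M[int]_n) : Prop :=
  [/\ Zmatrix L,
      (map_mx (intr : int -> rat) L) \in unitmx
    & forall i j : 'I_n, 0 <= invmx (map_mx (intr : int -> rat) L) i j].

Definition nonneg_vec (n : nat) (v : 'cV[int]_n) : Prop :=
  forall i : 'I_n, 0 <= v i 0.

Definition Lequiv (n : nat) (L : 'M[int]_n) (f g : 'cV[int]_n) : Prop :=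
  exists z : 'cV[int]_n, g - f = L *m z.

Definition zsuperstable (n : nat) (L : 'M[int]_n) (f : 'cV[int]_n) : Prop :=
  nonneg_vec f /\
  forall z : 'cV[int]_n, nonneg_vec z -> z != 0 ->
    exists i : 'I_n, f i 0 - (L *m z) i 0 < 0.

Definition Ephi (R : realFieldType) (n : nat) (L : 'M[int]_n)
    (phi : 'I_n -> R -> R) (q : 'cV[int]_n) : R :=
  \sum_(i < n)
     phi i ((invmx (map_mx (intr : int -> R) L) *m map_mx (intr : int -> R) q) i 0).

Definition is_unique_minimizer (R : realFieldType) (n : nat) (L : 'M[int]_n)
    (phi : 'I_n -> R -> R) (f : 'cV[int]_n) : Prop :=
  [/\ Lequiv L f f, nonneg_vec f &
      forall g : 'cV[int]_n, Lequiv L f g -> nonneg_vec g -> g != f ->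
        Ephi L phi f < Ephi L phi g].

(* Main.v *)
Require Import Defs.
From HB Require Import structures.
From mathcomp Require Import all_boot all_order all_algebra.
Import Order.TTheory GRing.Theory Num.Theory.
Local Open Scope ring_scope.

Lemma unit_R (R : realFieldType) (n : nat) (L : 'M[int]_n) :
  nonsingular_Mmatrix L -> map_mx (intr : int -> R) L \in unitmx.
Proof.
case=> _ hu _.
move: hu; rewrite !unitmxE !unitfE !det_map_mx /=.
by rewrite !intr_eq0.
Qed.

Lemma vec_shift (R : realFieldType) (n : nat) (L : 'M[int]_n) (q z : 'cV[int]_n) :
  map_mx (intr : int -> R) L \in unitmx ->
  invmx (map_mx (intr : int -> R) L) *m map_mx intr (q + L *m z) =
  invmx (map_mx (intr : int -> R) L) *m map_mx intr q + map_mx intr z.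
Proof.
move=> hu; rewrite map_mxD map_mxM mulmxDr mulmxA mulVmx // mul1mx //.
Qed.

Lemma phi_le (R : realFieldType) (n : nat) (phi : 'I_n -> R -> R)
  (hphi_incr : forall (i : 'I_n) (x y : R), x < y -> phi i x < phi i y)
  i x y : x <= y -> phi i x <= phi i y.
Proof.
rewrite le_eqVlt => /orP [/eqP -> //| /hphi_incr h]; exact: ltW.
Qed.

Lemma sum_le (R : realFieldType) (n : nat) (phi : 'I_n -> R -> R)
  (hphi_incr : forall (i : 'I_n) (x y : R), x < y -> phi i x < phi i y)
  (a b : 'cV[R]_n) : (forall i, a i 0 <= b i 0) ->
  \sum_(i < n) phi i (a i 0) <= \sum_(i < n) phi i (b i 0).
Proof.
move=> h; apply: ler_sum => i _; exact: phi_le.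
Qed.

Lemma sum_lt (R : realFieldType) (n : nat) (phi : 'I_n -> R -> R)
  (hphi_incr : forall (i : 'I_n) (x y : R), x < y -> phi i x < phi i y)
  (a b : 'cV[R]_n) i0 : (forall i, a i 0 <= b i 0) -> a i0 0 < b i0 0 ->
  \sum_(i < n) phi i (a i 0) < \sum_(i < n) phi i (b i 0).
Proof.
move=> h h0; rewrite (bigD1 i0) //= [X in _ < X](bigD1 i0) //=.
apply: ltr_leD; first exact: hphi_incr.
apply: ler_sum => i _; exact: phi_le.
Qed.

Theorem mainTheorem15 (R : realFieldType) (n : nat) (L : 'M[int]_n)
    (phi : 'I_n -> R -> R)
    (hL : nonsingular_Mmatrix L)
    (hphi_nonneg : forall (i : 'I_n) (x : R), 0 <= phi i x)
    (hphi_incr : forall (i : 'I_n) (x y : R), x < y -> phi i x < phi i y)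
    (f : 'cV[int]_n) (hf : nonneg_vec f) :
  zsuperstable L f <-> is_unique_minimizer L phi f.
Proof.
have hu := @unit_R R _ _ hL.
have hZ : Zmatrix L by case: hL.
split.
- move=> [_ hs]; split => //.
    by exists 0; rewrite subrr mulmx0.
  move=> g [z hz] hg hgf.
  have eg : g = f + L *m z by rewrite -hz addrC subrK.
  have zpos : forall j, 0 <= z j 0.
    case: (boolP [forall j, 0 <= z j 0]) => [/forallP // | /forallPn [j0 hj0]].
    exfalso.
    pose w : 'cV[int]_n := \col_j (Num.max (- z j 0) 0).
    have wge : forall j, 0 <= w j 0 by move=> j; rewrite mxE le_max lexx orbT.
    have wgez : forall j, - z j 0 <= w j 0 by move=> j; rewrite mxE le_max lexx.
    have wn0 : w != 0.
      apply/negP => /eqP w0; move: (wgez j0); rewrite w0 mxE oppr_le0.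
      by rewrite (negbTE hj0).
    have [i hi] := hs w wge wn0.
    move: hi; rewrite subr_lt0 ltNge => /negP; apply.
    have gi : 0 <= f i 0 + (L *m z) i 0 by move: (hg i); rewrite eg mxE.
    case: (ltP (z i 0) 0) => hzi.
    + have wi : w i 0 = - z i 0 by rewrite mxE; apply/max_idPl; rewrite oppr_ge0 ltW.
      apply: (le_trans _ (_ : - (L *m z) i 0 <= f i 0)); last first.
        by rewrite -subr_ge0 opprK.
      rewrite !mxE -sumrN; apply: ler_sum => j _.
      case: (eqVneq i j) => [<-|hij]; first by rewrite wi mulrN.
      rewrite -mulrN; apply: ler_wnM2l; [exact: hZ | exact: wgez].
    + have wi : w i 0 = 0 by rewrite mxE; apply/max_idPr; rewrite oppr_le0.
      apply: (le_trans _ (hf i)); rewrite mxE; apply: sumr_le0 => j _.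
      case: (eqVneq i j) => [<-|hij]; first by rewrite wi mulr0.
      apply: mulr_le0_ge0; [exact: hZ | exact: wge].
  have [i0 hi0] : exists i0, z i0 0 != 0.
    case: (boolP [exists i, z i 0 != 0]) => [/existsP // | /existsPn h0].
    exfalso; move/negP: hgf; apply; rewrite eg.
    have -> : z = 0 by apply/matrixP => i j; rewrite ord1 mxE; apply/eqP; move: (h0 i); rewrite negbK.
    by rewrite mulmx0 addr0.
  rewrite /Ephi eg vec_shift //.
  apply: (@sum_lt R n phi hphi_incr _ _ i0) => [j|]; rewrite !mxE.
    by rewrite lerDl ler0z zpos.
  by rewrite ltrDl ltr0z lt_def hi0 zpos.
- move=> [_ _ hm]; split => // z zpos zn0.
  case: (boolP [exists i, f i 0 - (L *m z) i 0 < 0]) => [/existsP // | /existsPn hall].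
  exfalso.
  pose g := f + L *m (- z).
  have hLe : Lequiv L f g by exists (- z); rewrite /g addrC addKr.
  have hgn : nonneg_vec g.
    move=> i; move: (hall i); rewrite -leNgt /g mulmxN.
    by rewrite [X in _ -> _ <= X]mxE [X in _ -> _ <= _ + X]mxE.
  have hgf : g != f.
    apply/negP => /eqP eg; move/negP: zn0; apply; apply/eqP.
    have h0 : L *m z = 0 by move: eg; rewrite /g mulmxN => /eqP; rewrite addrC -subr_eq0 addrK oppr_eq0 => /eqP.
    have : map_mx (intr : int -> R) (f + L *m z) = map_mx intr f by rewrite h0 addr0.
    move=> /(congr1 (mulmx (invmx (map_mx (intr : int -> R) L)))).
    rewrite vec_shift // => /eqP; rewrite addrC -subr_eq0 addrK => /eqP hz.
    apply/matrixP => i j; move/matrixP: hz => /(_ i j); rewrite !mxE.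
    by move=> /eqP; rewrite intr_eq0 => /eqP.
  have := hm g hLe hgn hgf; apply/negP; rewrite -leNgt.
  rewrite /Ephi /g vec_shift //.
  apply: (@sum_le R n phi hphi_incr) => j; rewrite !mxE.
  by rewrite gerDl lerz0 oppr_le0 zpos.
Qed.
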